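(* Let $T\ge 1$, $d=2T$, $\lambda,\mu>0$, $a\in\mathbb{R}$, $b,c>0$, and consider $F$ built from the functions $f_i$ described in the context. Let $x^\star$ be the unique minimizer of $F$. Then all blocks $x^\star_i$ of the first group are equal to a common vector $y^\star\in\mathbb{R}^d$, and all blocks of the second group are equal to a common vector $z^\star\in\mathbb{R}^d$. Moreover, for every $1\le i\le 2T-1$, $$w_{i+1}=Q_r\,w_i,$$ where $w_i=(z^\star_i,y^\star_i)^\top$ if $i$ is even and $w_i=(y^\star_i,z^\star_i)^\top$ if $i$ is odd. Here $r=\tfrac12$ if $n$ is even and $r=\tfrac{M}{n}$ if $n=2M+1$. With $s=\mu/\lambda$, $$Q_r=\begin{pmatrix}-\frac{r}{c} & \frac{c+s+r}{c}\\[2pt] -\frac{c+s+r}{c} & \frac{(c+s+r)^2}{cr}-\frac{c}{r}\end{pmatrix}.$$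
   Context: The objective is $F(x)=\frac1n\sum_{i=1}^n f_i(x_i)+\lambda\frac1{2n}\sum_{i=1}^n\|x_i-\bar x\|^2$ for $x=[x_1,\dots,x_n]\in\mathbb{R}^{nd}$, where $\bar x=\frac1n\sum_i x_i$. The functions below are written with $y=(y_1,\dots,y_{2T})\in\mathbb{R}^{2T}$. Even $n$. For $1\le i\le n/2$ (first group), $$f_i(y)=\tfrac{\mu}{2}\|y\|^2+ay_1+\tfrac{\lambda c}{2}\sum_{j=1}^{T-1}(y_{2j}-y_{2j+1})^2+\tfrac{\lambda b}{2}y_{2T}^2 .$$ For $n/2<i\le n$ (second group), $$f_i(y)=\tfrac{\mu}{2}\|y\|^2+\tfrac{\lambda c}{2}\sum_{j=0}^{T-1}(y_{2j+1}-y_{2j+2})^2 .$$ Odd $n=2M+1$ with $M\ge1$. For $1\le i\le M$ (first group), $$f_i(y)=\tfrac{M+1}{M}\tfrac{\mu}{2}\|y\|^2+ay_1+\tfrac{\lambda}{2}\tfrac{M+1}{M}c\sum_{j=1}^{T-1}(y_{2j}-y_{2j+1})^2+\tfrac{\lambda b}{2}y_{2T}^2 .$$ For $M<i\le n$ (second group), $f_i$ is the second-group function from the even case. *)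

(* Defs.v *)
From HB Require Import structures.
From mathcomp Require Import all_boot all_order all_algebra.
Set Implicit Arguments. Unset Strict Implicit. Unset Printing Implicit Defensive.
Import Order.TTheory GRing.Theory Num.Theory.
Local Open Scope ring_scope.

Section Defs.
Variable R : realFieldType.

(* 0-based coordinate access of a row vector by a natural number (0 outside range) *)
Definition at0 (m : nat) (y : 'rV[R]_m) (k : nat) : R :=
  match @insub nat (fun k => k < m)%N _ k with Some i => y 0 i | None => 0 end.

(* 1-based coordinate y_j, as in the paper *)
Definition cf (m : nat) (y : 'rV[R]_m) (j : nat) : R := at0 y j.-1.

Definition sqn (m : nat) (y : 'rV[R]_m) : R := \sum_(i < m) y 0 i ^+ 2.

Variables (T : nat) (lam mu a b c : R).
Local Notation d := (2 * T)%N.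

Definition f1_even (y : 'rV[R]_d) : R :=
  mu / 2 * sqn y + a * cf y 1
  + lam * c / 2 * \sum_(1 <= j < T) (cf y (2 * j) - cf y (2 * j + 1)) ^+ 2
  + lam * b / 2 * cf y d ^+ 2.

Definition f1_odd (M : nat) (y : 'rV[R]_d) : R :=
  (M.+1)%:R / M%:R * (mu / 2) * sqn y + a * cf y 1
  + lam / 2 * ((M.+1)%:R / M%:R) * c
      * \sum_(1 <= j < T) (cf y (2 * j) - cf y (2 * j + 1)) ^+ 2
  + lam * b / 2 * cf y d ^+ 2.

Definition f2 (y : 'rV[R]_d) : R :=
  mu / 2 * sqn y
  + lam * c / 2 * \sum_(0 <= j < T) (cf y (2 * j + 1) - cf y (2 * j + 2)) ^+ 2.

(* f_i for 0-based block index i in 'I_n : the first group is i < n./2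
   (n./2 = n/2 for even n, = M for n = 2M+1) *)
Definition fi (n : nat) (i : 'I_n) (y : 'rV[R]_d) : R :=
  if (i < n./2)%N then (if odd n then f1_odd n./2 y else f1_even y) else f2 y.

Definition xbar (n : nat) (x : 'I_n -> 'rV[R]_d) : 'rV[R]_d :=
  n%:R^-1 *: \sum_(i < n) x i.

Definition Fobj (n : nat) (x : 'I_n -> 'rV[R]_d) : R :=
  n%:R^-1 * \sum_(i < n) fi i (x i)
  + lam / (2 * n%:R) * \sum_(i < n) sqn (x i - xbar x).

End Defs.

Definition rpar (R : realFieldType) (n : nat) : R :=
  if odd n then (n./2)%:R / n%:R else 2^-1.

Definition Qmat (R : realFieldType) (lam mu c r : R) : 'M[R]_2 :=
  let s := mu / lam in
  \matrix_(i < 2, j < 2)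
    if (i == 0) && (j == 0) then - (r / c)
    else if (i == 0) then (c + s + r) / c
    else if (j == 0) then - ((c + s + r) / c)
    else (c + s + r) ^+ 2 / (c * r) - c / r.

Definition wvec (R : realFieldType) (m : nat) (y z : 'rV[R]_m) (i : nat) : 'cV[R]_2 :=
  \col_(k < 2)
    if odd i then (if k == 0 then cf y i else cf z i)
    else (if k == 0 then cf z i else cf y i).
Arguments Fobj [R] T lam mu a b c [n] x.

(* Main.v *)
Require Import Defs.
From HB Require Import structures.
From mathcomp Require Import all_boot all_order all_algebra ring lra zify.
From mathcomp Require Import fingroup perm.
Import Order.TTheory GRing.Theory Num.Theory.
Local Open Scope ring_scope.
Set Implicit Arguments. Unset Strict Implicit.

Section Basic.
Variable R : realFieldType.

Lemma quad0 (al be ga : R) : (forall t, al <= al + be * t + ga * t ^+ 2) -> be = 0.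
Proof.
move=> H; apply/eqP; apply/negPn/negP => hb.
set k := `|ga| + 1.
have kp : 0 < k by rewrite /k ltr_pwDr // normr_ge0.
have := H (- be / k).
have -> : al + be * (- be / k) + ga * (- be / k) ^+ 2 = al + be ^+ 2 / k ^+ 2 * (ga - k).
  by field; rewrite gt_eqF.
rewrite lerDl => h.
have h1 : 0 < be ^+ 2 / k ^+ 2.
  by apply: divr_gt0; [rewrite lt_def sqrf_eq0 hb sqr_ge0 | rewrite exprn_gt0].
have h2 : ga - k < 0 by rewrite subr_lt0 /k ltr_pwDr ?ler_norm.
have h3 : be ^+ 2 / k ^+ 2 * (ga - k) < 0 by rewrite pmulr_rlt0.
by move: h; rewrite leNgt h3.
Qed.

Variable m : nat.
Implicit Types u v : 'rV[R]_m.

Lemma at0D u v k : at0 (u + v) k = at0 u k + at0 v k.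
Proof. by rewrite /at0; case: insubP => [i _ _|_]; rewrite ?mxE ?addr0. Qed.
Lemma at0Z (s : R) u k : at0 (s *: u) k = s * at0 u k.
Proof. by rewrite /at0; case: insubP => [i _ _|_]; rewrite ?mxE ?mulr0. Qed.
Lemma at0N u k : at0 (- u) k = - at0 u k.
Proof. by rewrite -scaleN1r at0Z mulN1r. Qed.
Lemma at0B u v k : at0 (u - v) k = at0 u k - at0 v k.
Proof. by rewrite at0D at0N. Qed.
Lemma at00 k : at0 (0 : 'rV[R]_m) k = 0.
Proof. by rewrite /at0; case: insubP => [i _ _|_]; rewrite ?mxE. Qed.
Lemma at0_sum (I : finType) (F : I -> 'rV[R]_m) k :
  at0 (\sum_i F i) k = \sum_i at0 (F i) k.
Proof. apply: (big_morph (fun u => at0 u k)); [exact: (fun x y => at0D x y k)| exact: at00]. Qed.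
Lemma at0_ord u (i : 'I_m) : at0 u i = u 0 i.
Proof.
rewrite /at0; case: insubP => [j _ hj|]; last by rewrite ltn_ord.
by congr (u 0 _); apply: val_inj.
Qed.
Lemma at0_delta (K : 'I_m) k : at0 (delta_mx 0 K : 'rV[R]_m) k = (k == K)%:R.
Proof.
rewrite /at0; case: insubP => [j _ hj|hk]; first by rewrite mxE eqxx /= -hj.
case: eqP => // e; move: hk; by rewrite e ltn_ord.
Qed.
Lemma cfD u v k : cf (u + v) k = cf u k + cf v k. Proof. exact: at0D. Qed.
Lemma cfZ s u k : cf (s *: u) k = s * cf u k. Proof. exact: at0Z. Qed.
Lemma cf_delta (K : 'I_m) k : cf (delta_mx 0 K : 'rV[R]_m) k = (k.-1 == K)%:R.
Proof. exact: at0_delta. Qed.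

Lemma sum_delta (F : 'I_m -> R) (K : 'I_m) : \sum_i F i * (i == K)%:R = F K.
Proof.
rewrite (bigD1 K) //= eqxx mulr1 big1 ?addr0 // => i /negbTE ->; by rewrite mulr0.
Qed.
Lemma sum_delta1 (K : 'I_m) : \sum_(i < m) (i == K)%:R = 1 :> R.
Proof. by rewrite (bigD1 K) //= eqxx big1 ?addr0 // => i /negbTE ->. Qed.

Lemma sqn_pert u (K : 'I_m) s :
  sqn (u + s *: delta_mx 0 K) = sqn u + s * (2 * u 0 K) + s ^+ 2.
Proof.
rewrite /sqn.
transitivity (\sum_(i < m) (u 0 i ^+ 2 + s * (2 * (u 0 i * (i == K)%:R)) + s ^+ 2 * (i == K)%:R)).
  apply: eq_bigr => i _; rewrite !mxE /=.
  case: (i == K); rewrite /= ?mulr1 ?mulr0 ?mulr0; ring.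
rewrite !big_split /= -!mulr_sumr (sum_delta (fun i => u 0 i)) sum_delta1 mulr1.
by [].
Qed.

Lemma sqn_ge0 u : 0 <= sqn u.
Proof. by apply: sumr_ge0 => i _; rewrite sqr_ge0. Qed.

Lemma sqn_eq0 u : sqn u = 0 -> u = 0.
Proof.
move=> h; apply/rowP => i; rewrite mxE.
have := (@psumr_eq0P _ _ _ _ (fun j _ => sqr_ge0 (u 0 j)) h i isT).
by move/eqP; rewrite sqrf_eq0 => /eqP.
Qed.

Lemma sqn_mid u v : sqn u + sqn v - 2 * sqn (2^-1 *: (u + v)) = 2^-1 * sqn (u - v).
Proof.
rewrite /sqn mulr_sumr mulr_sumr -big_split -sumrB /=.
apply: eq_bigr => i _; rewrite !mxE; field.
by [].
Qed.
End Basic.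

Section FOC.
Variable R : realFieldType.
Variables (n T : nat) (lam mu a b c : R).
Hypothesis n0 : (0 < n)%N.
Variable xs : 'I_n -> 'rV[R]_(2 * T).
Hypothesis hmin : forall x : 'I_n -> 'rV[R]_(2 * T),
            Fobj T lam mu a b c xs <= Fobj T lam mu a b c x.

Lemma nR0 : (n%:R : R) != 0.
Proof. by rewrite pnatr_eq0 -lt0n. Qed.

Lemma sum_dev : \sum_j (xs j - xbar xs) = 0.
Proof.
rewrite sumrB sumr_const card_ord -scaler_nat /xbar scalerA mulfV ?nR0 // scale1r.
by rewrite subrr.
Qed.

Lemma foc (i0 : 'I_n) (K : 'I_(2 * T)) (D : R) :
  (exists G, forall t, fi lam mu a b c i0 (xs i0 + t *: delta_mx 0 K)
      = fi lam mu a b c i0 (xs i0) + t * D + t ^+ 2 * G) ->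
  D + lam * (xs i0 0 K - xbar xs 0 K) = 0.
Proof.
case=> G HG.
set e : 'rV[R]_(2 * T) := delta_mx 0 K.
pose x' t := fun j => xs j + (t * (j == i0)%:R) *: e.
have S1 t : \sum_j fi lam mu a b c j (x' t j)
    = \sum_j fi lam mu a b c j (xs j) + t * D + t ^+ 2 * G.
  rewrite (bigD1 i0) //= [in RHS](bigD1 i0) //= /x' eqxx mulr1 HG.
  rewrite (eq_bigr (fun j => fi lam mu a b c j (xs j))); first ring.
  by move=> j /negbTE ->; rewrite mulr0 scale0r addr0.
have S2 t : xbar (x' t) = xbar xs + (t / n%:R) *: e.
  rewrite /xbar big_split /= -scaler_suml -mulr_sumr sum_delta1 mulr1.
  by rewrite scalerDr scalerA mulrC.
have S3 t j : x' t j - xbar (x' t) = (xs j - xbar xs) + (t * ((j == i0)%:R - n%:R^-1)) *: e.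
  by rewrite S2 /x' mulrBr scalerBl opprD addrACA.
set w := fun j => xs j - xbar xs.
have Sw : \sum_j w j 0 K = 0.
  by have := congr1 (fun M : 'rV[R]_(2 * T) => M 0 K) sum_dev; rewrite summxE mxE.
have S4 t : \sum_j sqn (x' t j - xbar (x' t)) = \sum_j sqn (w j)
     + t * (2 * w i0 0 K) + t ^+ 2 * \sum_j ((j == i0)%:R - n%:R^-1) ^+ 2.
  under eq_bigr => j _ do rewrite S3 sqn_pert.
  rewrite !big_split /=; congr (_ + _ + _).
    transitivity (\sum_j (t * (2 * (w j 0 K * (j == i0)%:R)) - t * (2 * n%:R^-1 * w j 0 K))).
      by apply: eq_bigr => j _; rewrite /w; ring.
    rewrite sumrB -!mulr_sumr.
    by rewrite Sw (sum_delta (fun j => w j 0 K)) !mulr0 subr0.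
  by rewrite mulr_sumr; apply: eq_bigr => j _; rewrite exprMn.
have HF t : Fobj T lam mu a b c (x' t) = Fobj T lam mu a b c xs
   + (n%:R^-1 * (D + lam * w i0 0 K)) * t
   + (n%:R^-1 * G + lam / (2 * n%:R) * \sum_j ((j == i0)%:R - n%:R^-1) ^+ 2) * t ^+ 2.
  rewrite /Fobj S1 S4 /w; field; by rewrite nR0.
have /quad0 : forall t, Fobj T lam mu a b c xs <= Fobj T lam mu a b c xs
   + (n%:R^-1 * (D + lam * w i0 0 K)) * t
   + (n%:R^-1 * G + lam / (2 * n%:R) * \sum_j ((j == i0)%:R - n%:R^-1) ^+ 2) * t ^+ 2.
  by move=> t; rewrite -HF.
move/eqP; rewrite mulf_eq0 invr_eq0 (negbTE nR0) /= => /eqP.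
by rewrite /w !mxE.
Qed.
End FOC.

Section Sums.
Variable R : realFieldType.

Lemma sum_nat_delta (F : nat -> R) m k J : (m <= J < k)%N ->
  \sum_(m <= j < k) F j * (j == J)%:R = F J.
Proof.
move=> h.
rewrite (eq_bigr (fun j => if j == J then F j else 0)); last first.
  by move=> j _; case: eqP; rewrite ?mulr1 ?mulr0.
by rewrite -big_mkcond big_nat1_eq h.
Qed.

Lemma sum_sq_aff (r : seq nat) (p q : nat -> R) t :
  \sum_(j <- r) (p j + t * q j) ^+ 2 =
  \sum_(j <- r) p j ^+ 2 + t * (2 * \sum_(j <- r) p j * q j) + t ^+ 2 * \sum_(j <- r) q j ^+ 2.
Proof.
rewrite (eq_bigr (fun j => p j ^+ 2 + t * (2 * (p j * q j)) + t ^+ 2 * q j ^+ 2)).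
  by rewrite !big_split /= -!mulr_sumr.
by move=> j _; ring.
Qed.

Lemma sum_sq_mid (r : seq nat) (p q : nat -> R) :
  \sum_(j <- r) p j ^+ 2 + \sum_(j <- r) q j ^+ 2 - 2 * \sum_(j <- r) ((p j + q j) / 2) ^+ 2
  = 2^-1 * \sum_(j <- r) (p j - q j) ^+ 2.
Proof.
rewrite mulr_sumr mulr_sumr -big_split -sumrB /=.
apply: eq_bigr => j _; field; by [].
Qed.

Lemma sumZo (P : nat -> R) J T : (J < T)%N ->
  \sum_(0 <= j < T) P j * (((2 * j + 1).-1 == 2 * J)%:R - ((2 * j + 2).-1 == 2 * J)%:R) = P J.
Proof.
move=> h; rewrite -(sum_nat_delta P (m:=0) (k:=T)) ?h //.
apply: eq_big_nat => j _.
have -> : ((2 * j + 1).-1 == 2 * J) = (j == J) by apply/eqP/eqP; lia.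
have -> : ((2 * j + 2).-1 == 2 * J) = false by apply/eqP; lia.
by rewrite subr0.
Qed.

Lemma sumZe (P : nat -> R) J T : (J < T)%N ->
  \sum_(0 <= j < T) P j * (((2 * j + 1).-1 == 2 * J + 1)%:R - ((2 * j + 2).-1 == 2 * J + 1)%:R) = - P J.
Proof.
move=> h; rewrite -(sum_nat_delta P (m:=0) (k:=T)) ?h // -sumrN.
apply: eq_big_nat => j _.
have -> : ((2 * j + 2).-1 == 2 * J + 1) = (j == J) by apply/eqP/eqP; lia.
have -> : ((2 * j + 1).-1 == 2 * J + 1) = false by apply/eqP; lia.
by rewrite sub0r mulrN.
Qed.

Lemma sumYe (P : nat -> R) J T : (1 <= J < T)%N ->
  \sum_(1 <= j < T) P j * (((2 * j).-1 == (2 * J).-1)%:R - ((2 * j + 1).-1 == (2 * J).-1)%:R) = P J.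
Proof.
move=> h; rewrite -(sum_nat_delta P (m:=1) (k:=T)) ?h //.
apply: eq_big_nat => j /andP [hj _].
have -> : ((2 * j).-1 == (2 * J).-1) = (j == J) by apply/eqP/eqP; lia.
have -> : ((2 * j + 1).-1 == (2 * J).-1) = false by apply/eqP; lia.
by rewrite subr0.
Qed.

Lemma sumYo (P : nat -> R) J T : (1 <= J < T)%N ->
  \sum_(1 <= j < T) P j * (((2 * j).-1 == 2 * J)%:R - ((2 * j + 1).-1 == 2 * J)%:R) = - P J.
Proof.
move=> h; rewrite -(sum_nat_delta P (m:=1) (k:=T)) ?h // -sumrN.
apply: eq_big_nat => j /andP [hj _].
have -> : ((2 * j + 1).-1 == 2 * J) = (j == J) by apply/eqP/eqP; lia.
have -> : ((2 * j).-1 == 2 * J) = false by apply/eqP; lia.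
by rewrite sub0r mulrN.
Qed.
End Sums.

Section Exp.
Variable R : realFieldType.
Variables (T : nat) (lam mu a b c : R).

Definition g1 (A B : R) (y : 'rV[R]_(2 * T)) : R :=
  A * sqn y + a * cf y 1 + B * \sum_(1 <= j < T) (cf y (2 * j) - cf y (2 * j + 1)) ^+ 2
  + lam * b / 2 * cf y (2 * T) ^+ 2.

Lemma f1_evenE y : f1_even lam mu a b c y = g1 (mu / 2) (lam * c / 2) y.
Proof. by []. Qed.
Lemma f1_oddE M y : f1_odd lam mu a b c M y =
  g1 ((M.+1)%:R / M%:R * (mu / 2)) (lam / 2 * ((M.+1)%:R / M%:R) * c) y.
Proof. by []. Qed.

Lemma cf_pert (u : 'rV[R]_(2 * T)) (K : 'I_(2 * T)) t j :
  cf (u + t *: delta_mx 0 K) j = cf u j + t * (j.-1 == K)%:R.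
Proof. by rewrite cfD cfZ cf_delta. Qed.

Lemma cf_mid (u v : 'rV[R]_(2 * T)) j :
  cf (2^-1 *: (u + v)) j = (cf u j + cf v j) / 2.
Proof. by rewrite cfZ cfD mulrC. Qed.

Lemma f2_pert (u : 'rV[R]_(2 * T)) (K : 'I_(2 * T)) : exists G, forall t,
  f2 lam mu c (u + t *: delta_mx 0 K) = f2 lam mu c u
   + t * (mu * u 0 K + lam * c * \sum_(0 <= j < T) (cf u (2 * j + 1) - cf u (2 * j + 2))
            * (((2 * j + 1).-1 == K)%:R - ((2 * j + 2).-1 == K)%:R)) + t ^+ 2 * G.
Proof.
pose p := fun j => cf u (2 * j + 1) - cf u (2 * j + 2).
pose q := fun j => (((2 * j + 1).-1 == K)%:R - ((2 * j + 2).-1 == K)%:R) : R.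
exists (mu / 2 + lam * c / 2 * \sum_(0 <= j < T) q j ^+ 2) => t.
rewrite /f2 sqn_pert.
rewrite (eq_bigr (fun j => (p j + t * q j) ^+ 2)); last first.
  by move=> j _; rewrite !cf_pert /p /q; congr (_ ^+ 2); ring.
by rewrite sum_sq_aff /p /q /=; field.
Qed.

Lemma g1_pert A B (u : 'rV[R]_(2 * T)) (K : 'I_(2 * T)) : exists G, forall t,
  g1 A B (u + t *: delta_mx 0 K) = g1 A B u
   + t * (2 * A * u 0 K + a * (0%N == K)%:R
          + 2 * B * \sum_(1 <= j < T) (cf u (2 * j) - cf u (2 * j + 1))
            * (((2 * j).-1 == K)%:R - ((2 * j + 1).-1 == K)%:R)
          + lam * b * cf u (2 * T) * ((2 * T).-1 == K)%:R) + t ^+ 2 * G.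
Proof.
pose p := fun j => cf u (2 * j) - cf u (2 * j + 1).
pose q := fun j => (((2 * j).-1 == K)%:R - ((2 * j + 1).-1 == K)%:R) : R.
exists (A + B * \sum_(1 <= j < T) q j ^+ 2 + lam * b / 2 * ((2 * T).-1 == K)%:R ^+ 2) => t.
rewrite /g1 sqn_pert !cf_pert.
rewrite (eq_bigr (fun j => (p j + t * q j) ^+ 2)); last first.
  by move=> j _; rewrite !cf_pert /p /q; congr (_ ^+ 2); ring.
by rewrite sum_sq_aff /p /q /=; field.
Qed.

Lemma f2_conv (u v : 'rV[R]_(2 * T)) : 0 <= mu -> 0 <= lam * c ->
  2 * f2 lam mu c (2^-1 *: (u + v)) <= f2 lam mu c u + f2 lam mu c v.
Proof.
move=> hm hlc; rewrite -subr_ge0.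
pose p := fun j => cf u (2 * j + 1) - cf u (2 * j + 2).
pose q := fun j => cf v (2 * j + 1) - cf v (2 * j + 2).
have h1 := sqn_mid u v.
have h2 := sum_sq_mid (index_iota 0 T) p q.
have -> : f2 lam mu c u + f2 lam mu c v - 2 * f2 lam mu c (2^-1 *: (u + v)) =
  mu / 2 * (2^-1 * sqn (u - v)) + lam * c / 2 * (2^-1 * \sum_(0 <= j < T) (p j - q j) ^+ 2).
  rewrite -h1 -h2 /f2.
  have hmid : \sum_(0 <= j < T) (cf (2^-1 *: (u + v)) (2 * j + 1) - cf (2^-1 *: (u + v)) (2 * j + 2)) ^+ 2
     = \sum_(0 <= j < T) ((p j + q j) / 2) ^+ 2.
    by apply: eq_bigr => j _; rewrite !cf_mid /p /q; congr (_ ^+ 2); field.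
  rewrite hmid.
  by rewrite /p /q /=; field.
have hs : 0 <= \sum_(0 <= j < T) (p j - q j) ^+ 2 by apply: sumr_ge0 => j _; rewrite sqr_ge0.
apply: addr_ge0; apply: mulr_ge0.
- by rewrite divr_ge0.
- by rewrite mulr_ge0 ?invr_ge0 ?sqn_ge0.
- by rewrite divr_ge0.
- by rewrite mulr_ge0 ?invr_ge0.
Qed.

Lemma g1_conv A B (u v : 'rV[R]_(2 * T)) : 0 <= A -> 0 <= B -> 0 <= lam * b ->
  2 * g1 A B (2^-1 *: (u + v)) <= g1 A B u + g1 A B v.
Proof.
move=> hA hB hlb; rewrite -subr_ge0.
pose p := fun j => cf u (2 * j) - cf u (2 * j + 1).
pose q := fun j => cf v (2 * j) - cf v (2 * j + 1).
have h1 := sqn_mid u v.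
have h2 := sum_sq_mid (index_iota 1 T) p q.
have -> : g1 A B u + g1 A B v - 2 * g1 A B (2^-1 *: (u + v)) =
  A * (2^-1 * sqn (u - v)) + B * (2^-1 * \sum_(1 <= j < T) (p j - q j) ^+ 2)
  + lam * b / 2 * (2^-1 * (cf u (2 * T) - cf v (2 * T)) ^+ 2).
  rewrite -h1 -h2 /g1 !cf_mid.
  have hmid : \sum_(1 <= j < T) (cf (2^-1 *: (u + v)) (2 * j) - cf (2^-1 *: (u + v)) (2 * j + 1)) ^+ 2
     = \sum_(1 <= j < T) ((p j + q j) / 2) ^+ 2.
    by apply: eq_bigr => j _; rewrite !cf_mid /p /q; congr (_ ^+ 2); field.
  rewrite hmid.
  by rewrite /p /q /=; field.
have hs : 0 <= \sum_(1 <= j < T) (p j - q j) ^+ 2 by apply: sumr_ge0 => j _; rewrite sqr_ge0.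
apply: addr_ge0; first apply: addr_ge0; apply: mulr_ge0 => //.
- by rewrite mulr_ge0 ?invr_ge0 ?sqn_ge0.
- by rewrite mulr_ge0 ?invr_ge0.
- by rewrite divr_ge0.
- by rewrite mulr_ge0 ?invr_ge0 ?sqr_ge0.
Qed.
End Exp.

Section Conv.
Variable R : realFieldType.
Variables (n T : nat) (lam mu a b c : R).
Hypothesis n0 : (0 < n)%N.
Hypotheses (hlam : 0 < lam) (hmu : 0 < mu) (hb : 0 < b) (hc : 0 < c).

Lemma fi_conv (i : 'I_n) (u v : 'rV[R]_(2 * T)) :
  2 * fi lam mu a b c i (2^-1 *: (u + v)) <= fi lam mu a b c i u + fi lam mu a b c i v.
Proof.
have hl := ltW hlam; have hm := ltW hmu.
have hlb : 0 <= lam * b by rewrite mulr_ge0 // ltW.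
have hlc : 0 <= lam * c by rewrite mulr_ge0 // ltW.
rewrite /fi; case: ifP => _; last exact: f2_conv.
case: ifP => _.
  rewrite !f1_oddE; apply: g1_conv => //.
    by rewrite mulr_ge0 ?divr_ge0 ?ler0n.
  by rewrite mulr_ge0 ?(ltW hc) // mulr_ge0 ?divr_ge0 ?ler0n.
rewrite !f1_evenE; apply: g1_conv => //; by rewrite divr_ge0.
Qed.

Lemma nR0' : (n%:R : R) != 0.
Proof. by rewrite pnatr_eq0 -lt0n. Qed.

Lemma Fobj_conv (u v : 'I_n -> 'rV[R]_(2 * T)) :
  lam / (2 * n%:R) * \sum_j (2^-1 * sqn ((u j - xbar u) - (v j - xbar v)))
  <= Fobj T lam mu a b c u + Fobj T lam mu a b c v
     - 2 * Fobj T lam mu a b c (fun j => 2^-1 *: (u j + v j)).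
Proof.
set mid := fun j => 2^-1 *: (u j + v j).
have Xm : xbar mid = 2^-1 *: (xbar u + xbar v).
  rewrite /xbar /mid -scaler_sumr big_split /= scalerA mulrC -scalerA.
  by rewrite !scalerDr.
have Dm j : mid j - xbar mid = 2^-1 *: ((u j - xbar u) + (v j - xbar v)).
  by rewrite Xm /mid -scalerBr opprD addrACA.
have E1 : \sum_j (fi lam mu a b c j (u j) + fi lam mu a b c j (v j) - 2 * fi lam mu a b c j (mid j))
   = \sum_j fi lam mu a b c j (u j) + \sum_j fi lam mu a b c j (v j) - 2 * \sum_j fi lam mu a b c j (mid j).
  by rewrite sumrB big_split mulr_sumr.
have E2 : \sum_j (sqn (u j - xbar u) + sqn (v j - xbar v) - 2 * sqn (mid j - xbar mid))
   = \sum_j sqn (u j - xbar u) + \sum_j sqn (v j - xbar v) - 2 * \sum_j sqn (mid j - xbar mid).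
  by rewrite sumrB big_split mulr_sumr.
have -> : Fobj T lam mu a b c u + Fobj T lam mu a b c v - 2 * Fobj T lam mu a b c mid
   = n%:R^-1 * \sum_j (fi lam mu a b c j (u j) + fi lam mu a b c j (v j) - 2 * fi lam mu a b c j (mid j))
     + lam / (2 * n%:R) * \sum_j (sqn (u j - xbar u) + sqn (v j - xbar v) - 2 * sqn (mid j - xbar mid)).
  rewrite E1 E2 /Fobj; field; by rewrite nR0'.
under [X in _ <= _ + _ * X]eq_bigr => j _ do rewrite Dm sqn_mid.
rewrite lerDr mulr_ge0 ?invr_ge0 ?ler0n //.
by apply: sumr_ge0 => j _; rewrite subr_ge0 fi_conv.
Qed.
End Conv.

Section Group.
Variable R : realFieldType.
Variables (n T : nat) (lam mu a b c : R).
Hypothesis n0 : (0 < n)%N.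
Hypotheses (hlam : 0 < lam) (hmu : 0 < mu) (hb : 0 < b) (hc : 0 < c).
Variable xs : 'I_n -> 'rV[R]_(2 * T).
Hypothesis hmin : forall x : 'I_n -> 'rV[R]_(2 * T),
            Fobj T lam mu a b c xs <= Fobj T lam mu a b c x.

Lemma group_eq (i1 i2 : 'I_n) : (i1 < n./2)%N = (i2 < n./2)%N -> xs i1 = xs i2.
Proof.
move=> hs.
pose tau := tperm i1 i2.
pose v := fun j => xs (tau j).
have fiE j y : fi lam mu a b c (tau j) y = fi lam mu a b c j y.
  rewrite /fi; have -> : (tau j < n./2)%N = (j < n./2)%N by rewrite /tau; case: tpermP => [->|->|] //.
  by [].
have Xv : xbar v = xbar xs.
  by rewrite /xbar /v [in RHS](reindex_inj (@perm_inj _ tau)).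
have Fv : Fobj T lam mu a b c v = Fobj T lam mu a b c xs.
  rewrite /Fobj Xv /v; congr (_ * _ + _ * _).
    rewrite [in RHS](reindex_inj (@perm_inj _ tau)) /=.
    by apply: eq_bigr => j _; rewrite fiE.
  by rewrite [in RHS](reindex_inj (@perm_inj _ tau)).
have C := Fobj_conv a n0 hlam hmu hb hc xs v.
rewrite Fv Xv in C.
have M := hmin (fun j => 2^-1 *: (xs j + v j)).
have L : lam / (2 * n%:R) * (2^-1 * sqn (xs i1 - xs i2)) <= 0.
  apply: le_trans (le_trans C _); last first.
    by rewrite subr_le0 -mulr2n -[Fobj _ _ _ _ _ _ xs *+ 2]mulr_natl ler_pM2l ?ltr0n.
  rewrite ler_pM2l ?divr_gt0 ?mulr_gt0 ?ltr0n //.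
  rewrite (bigD1 i1) //= /v /tau tpermL.
  have -> : xs i1 - xbar xs - (xs i2 - xbar xs) = xs i1 - xs i2.
    by rewrite opprD opprK addrACA addNr addr0.
  rewrite lerDl; apply: sumr_ge0 => j _; by rewrite mulr_ge0 ?invr_ge0 ?sqn_ge0.
have : sqn (xs i1 - xs i2) = 0.
  apply/eqP; rewrite eq_le sqn_ge0 andbT.
  have hp : 0 < lam / (2 * n%:R) * 2^-1.
    by rewrite mulr_gt0 ?invr_gt0 ?ltr0n // divr_gt0 // mulr_gt0 ?ltr0n.
  by move: L; rewrite mulrA (pmulr_rle0 _ hp).
by move/sqn_eq0/eqP; rewrite subr_eq0 => /eqP.
Qed.
End Group.

Lemma foc' (R : realFieldType) (n T : nat) (lam mu a b c : R) (n0 : (0 < n)%N)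
  (xs : 'I_n -> 'rV[R]_(2 * T))
  (hmin : forall x : 'I_n -> 'rV[R]_(2 * T), Fobj T lam mu a b c xs <= Fobj T lam mu a b c x)
  (i0 : 'I_n) (K : 'I_(2 * T)) (D : R) (f : 'rV[R]_(2 * T) -> R) :
  (forall y, fi lam mu a b c i0 y = f y) ->
  (exists G, forall t, f (xs i0 + t *: delta_mx 0 K) = f (xs i0) + t * D + t ^+ 2 * G) ->
  D + lam * (xs i0 0 K - xbar xs 0 K) = 0.
Proof.
move=> hf [G HG]; apply: (foc n0 hmin); exists G => t; rewrite !hf; exact: HG.
Qed.

Lemma cf_ord (R : realFieldType) m (u : 'rV[R]_m) k (hk : (k.-1 < m)%N) :
  cf u k = u 0 (Ordinal hk).
Proof. exact: (at0_ord u (Ordinal hk)). Qed.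

Section Final.
Variable R : realFieldType.
Variables (n T : nat) (lam mu a b c : R).
Hypotheses (hn : (2 <= n)%N) (hT : (1 <= T)%N).
Hypotheses (hlam : 0 < lam) (hmu : 0 < mu) (hb : 0 < b) (hc : 0 < c).
Variable xs : 'I_n -> 'rV[R]_(2 * T).
Hypothesis hmin : forall x : 'I_n -> 'rV[R]_(2 * T),
            Fobj T lam mu a b c xs <= Fobj T lam mu a b c x.

Lemma n0 : (0 < n)%N. Proof. exact: ltnW. Qed.
Lemma M0 : (0 < n./2)%N. Proof. by rewrite half_gt0. Qed.
Lemma M2 : (n./2 + n./2 <= n)%N.
Proof. by rewrite addnn -{2}(odd_double_half n) leq_addl. Qed.
Lemma izP : (n.-1 < n)%N. Proof. by rewrite ltn_predL n0. Qed.

Definition iy : 'I_n := Ordinal n0.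
Definition iz : 'I_n := Ordinal izP.
Definition yv := xs iy.
Definition zv := xs iz.

Lemma G1 (i : 'I_n) : (i < n./2)%N -> xs i = yv.
Proof. move=> h; apply: (group_eq n0 hlam hmu hb hc hmin); by rewrite h /= M0. Qed.

Lemma G2 (i : 'I_n) : (n./2 <= i)%N -> xs i = zv.
Proof.
move=> h; apply: (group_eq n0 hlam hmu hb hc hmin).
have := M0; have := M2; rewrite /= !ltnNge h /=; move=> *; apply/esym/negbTE; rewrite -ltnNge; lia.
Qed.

Definition kap : R := if odd n then (n./2).+1%:R / (n./2)%:R else 1.
Definition Ay : R := if odd n then (n./2).+1%:R / (n./2)%:R * (mu / 2) else mu / 2.
Definition By : R := if odd n then lam / 2 * ((n./2).+1%:R / (n./2)%:R) * c else lam * c / 2.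

Lemma nhalfR : (n%:R : R) = (odd n)%:R + 2 * (n./2)%:R.
Proof. by rewrite -{1}(odd_double_half n) natrD -muln2 natrM mulrC. Qed.
Lemma Mne0 : ((n./2)%:R : R) != 0.
Proof. by rewrite pnatr_eq0 -lt0n M0. Qed.
Lemma nne0 : (n%:R : R) != 0.
Proof. by rewrite pnatr_eq0 -lt0n n0. Qed.

Lemma rE : rpar R n = (n./2)%:R / n%:R.
Proof.
rewrite /rpar; case: ifP => ho //.
have nn := nne0; rewrite nhalfR ho /= in nn *.
by field; rewrite Mne0.
Qed.

Lemma r1 : 1 - rpar R n = kap * rpar R n.
Proof.
rewrite rE /kap; have nn := nne0; have mm := Mne0.
case ho : (odd n); rewrite nhalfR ho /= in nn *; by field; rewrite ?nn ?mm.
Qed.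

Lemma hA : 2 * Ay = kap * mu.
Proof. rewrite /Ay /kap; have mm := Mne0; case: (odd n); field; by rewrite ?mm. Qed.
Lemma hB : 2 * By = kap * (lam * c).
Proof. rewrite /By /kap; have mm := Mne0; case: (odd n); field; by rewrite ?mm. Qed.
Lemma kap0 : kap != 0.
Proof.
rewrite /kap; case: (odd n); last exact: oner_neq0.
by rewrite mulf_neq0 ?invr_eq0 ?Mne0 // pnatr_eq0.
Qed.

Lemma fz (u : 'rV[R]_(2 * T)) : fi lam mu a b c iz u = f2 lam mu c u.
Proof.
rewrite /fi ifF //; apply/negbTE; rewrite -leqNgt /=.
have := M0; have := M2; lia.
Qed.
Lemma fy (u : 'rV[R]_(2 * T)) : fi lam mu a b c iy u = g1 lam a b Ay By u.
Proof. by rewrite /fi ifT /= ?M0 // /Ay /By; case: (odd n). Qed.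

Lemma sumxs : \sum_j xs j = yv *+ n./2 + zv *+ (n - n./2).
Proof.
rewrite (eq_bigr (fun j : 'I_n => if (j < n./2)%N then yv else zv)); last first.
  by move=> j _; case: ifP => h; [exact: G1 | apply: G2; rewrite leqNgt h].
rewrite -(big_mkord xpredT (fun j => if (j < n./2)%N then yv else zv)).
have hM : (n./2 <= n)%N by have := M2; lia.
have -> : \sum_(0 <= i < n) (if (i < n./2)%N then yv else zv)
  = \sum_(0 <= i < n./2) (if (i < n./2)%N then yv else zv)
    + \sum_(n./2 <= i < n) (if (i < n./2)%N then yv else zv).
  exact: (big_cat_nat _ (n:=n./2)).
rewrite (eq_big_nat _ _ (F2 := fun=> yv)); last by move=> j /andP [_ ->].
rewrite [X in _ + X](eq_big_nat _ _ (F2 := fun=> zv)); last first.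
  by move=> j /andP [h _]; rewrite ltnNge h.
by rewrite !sumr_const_nat subn0.
Qed.

Lemma XB K : xbar xs 0 K = rpar R n * yv 0 K + (1 - rpar R n) * zv 0 K.
Proof.
have hM : (n./2 <= n)%N by have := M2; lia.
rewrite /xbar sumxs [LHS]mxE [X in _ * X]mxE !mulmxnE.
rewrite -[yv 0 K *+ _]mulr_natr -[zv 0 K *+ _]mulr_natr natrB // rE.
by field; rewrite nne0.
Qed.

Lemma XZ K : zv 0 K - xbar xs 0 K = rpar R n * (zv 0 K - yv 0 K).
Proof. rewrite XB; ring. Qed.
Lemma XY K : yv 0 K - xbar xs 0 K = kap * rpar R n * (yv 0 K - zv 0 K).
Proof. rewrite XB -r1; ring. Qed.

Lemma eqZo J : (J < T)%N ->
  mu * cf zv (2 * J + 1) + lam * c * (cf zv (2 * J + 1) - cf zv (2 * J + 2))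
  + lam * rpar R n * (cf zv (2 * J + 1) - cf yv (2 * J + 1)) = 0.
Proof.
move=> hJ.
have hk : ((2 * J + 1).-1 < 2 * T)%N by lia.
have E := foc' n0 hmin fz (f2_pert lam mu c zv (Ordinal hk)).
rewrite -[xs iz]/zv XZ in E.
have eK : nat_of_ord (Ordinal hk) = 2 * J by rewrite /= addn1.
rewrite eK (sumZo (fun j => cf zv (2 * j + 1) - cf zv (2 * j + 2)) hJ) in E.
rewrite -(cf_ord zv hk) -(cf_ord yv hk) /= in E.
rewrite -E; ring.
Qed.

Lemma eqZe J : (J < T)%N ->
  mu * cf zv (2 * J + 2) + lam * c * (cf zv (2 * J + 2) - cf zv (2 * J + 1))
  + lam * rpar R n * (cf zv (2 * J + 2) - cf yv (2 * J + 2)) = 0.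
Proof.
move=> hJ.
have hk : ((2 * J + 2).-1 < 2 * T)%N by lia.
have E := foc' n0 hmin fz (f2_pert lam mu c zv (Ordinal hk)).
rewrite -[xs iz]/zv XZ in E.
have eK : nat_of_ord (Ordinal hk) = 2 * J + 1 by rewrite /=; lia.
rewrite eK (sumZe (fun j => cf zv (2 * j + 1) - cf zv (2 * j + 2)) hJ) in E.
rewrite -(cf_ord zv hk) -(cf_ord yv hk) /= in E.
rewrite -E; ring.
Qed.

Lemma eqYe J : (1 <= J < T)%N ->
  mu * cf yv (2 * J) + lam * c * (cf yv (2 * J) - cf yv (2 * J + 1))
  + lam * rpar R n * (cf yv (2 * J) - cf zv (2 * J)) = 0.
Proof.
move=> hJ.
have hk : ((2 * J).-1 < 2 * T)%N by lia.
have E := foc' n0 hmin fy (g1_pert lam a b Ay By yv (Ordinal hk)).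
rewrite -[xs iy]/yv XY hA hB in E.
have eK : nat_of_ord (Ordinal hk) = (2 * J).-1 by [].
rewrite eK (sumYe (fun j => cf yv (2 * j) - cf yv (2 * j + 1)) hJ) in E.
have e1 : ((0%N == (2 * J).-1)%:R : R) = 0 by rewrite (_ : (0%N == _) = false) //; apply/eqP; lia.
have e2 : (((2 * T).-1 == (2 * J).-1)%:R : R) = 0 by rewrite (_ : (_ == _) = false) //; apply/eqP; lia.
rewrite e1 e2 -(cf_ord zv hk) -(cf_ord yv hk) /= in E.
apply: (mulfI kap0); rewrite mulr0 -E; ring.
Qed.

Lemma eqYo J : (1 <= J < T)%N ->
  mu * cf yv (2 * J + 1) + lam * c * (cf yv (2 * J + 1) - cf yv (2 * J))
  + lam * rpar R n * (cf yv (2 * J + 1) - cf zv (2 * J + 1)) = 0.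
Proof.
move=> hJ.
have hk : ((2 * J + 1).-1 < 2 * T)%N by lia.
have E := foc' n0 hmin fy (g1_pert lam a b Ay By yv (Ordinal hk)).
rewrite -[xs iy]/yv XY hA hB in E.
have eK : nat_of_ord (Ordinal hk) = 2 * J by rewrite /= addn1.
rewrite eK (sumYo (fun j => cf yv (2 * j) - cf yv (2 * j + 1)) hJ) in E.
have e1 : ((0%N == 2 * J)%:R : R) = 0 by rewrite (_ : (0%N == _) = false) //; apply/eqP; lia.
have e2 : (((2 * T).-1 == 2 * J)%:R : R) = 0 by rewrite (_ : (_ == _) = false) //; apply/eqP; lia.
rewrite e1 e2 -(cf_ord zv hk) -(cf_ord yv hk) /= in E.
apply: (mulfI kap0); rewrite mulr0 -E; ring.
Qed.
End Final.

Lemma rec_step (R : realFieldType) (lam mu c r y0 z0 y1 z1 : R) :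
  lam != 0 -> c != 0 -> r != 0 ->
  mu * z0 + lam * c * (z0 - z1) + lam * r * (z0 - y0) = 0 ->
  mu * z1 + lam * c * (z1 - z0) + lam * r * (z1 - y1) = 0 ->
  z1 = - (r / c) * y0 + (c + mu / lam + r) / c * z0 /\
  y1 = - ((c + mu / lam + r) / c) * y0 + ((c + mu / lam + r) ^+ 2 / (c * r) - c / r) * z0.
Proof.
move=> hl hc hr E1 E2; split; apply/eqP; rewrite -subr_eq0; apply/eqP.
  rewrite (_ : z1 - _ = - (mu * z0 + lam * c * (z0 - z1) + lam * r * (z0 - y0)) / (lam * c)).
    by rewrite E1 oppr0 mul0r.
  by field; rewrite ?hl ?hc ?hr.
rewrite (_ : y1 - _ = - (mu + lam * c + lam * r) / (lam ^+ 2 * c * r)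
            * (mu * z0 + lam * c * (z0 - z1) + lam * r * (z0 - y0))
         - (lam * r)^-1 * (mu * z1 + lam * c * (z1 - z0) + lam * r * (z1 - y1))).
  by rewrite E1 E2 !mulr0 subrr.
by field; rewrite ?hl ?hc ?hr.
Qed.

Unset Implicit Arguments.
Set Strict Implicit.

Theorem mainTheorem2 (R : realFieldType) (n T : nat) (lam mu a b c : R)
  (hn : (2 <= n)%N) (hT : (1 <= T)%N)
  (hlam : 0 < lam) (hmu : 0 < mu) (hb : 0 < b) (hc : 0 < c)
  (xs : 'I_n -> 'rV[R]_(2 * T))
  (hmin : forall x : 'I_n -> 'rV[R]_(2 * T),
            Fobj T lam mu a b c xs <= Fobj T lam mu a b c x) :
  exists y z : 'rV[R]_(2 * T),
    (forall i : 'I_n, (i < n./2)%N -> xs i = y) /\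
    (forall i : 'I_n, (n./2 <= i)%N -> xs i = z) /\
    (forall i : nat, (1 <= i <= 2 * T - 1)%N ->
       wvec y z i.+1 = Qmat lam mu c (rpar R n) *m wvec y z i).
Proof.
exists (yv hn xs), (zv hn xs); split; first exact: (G1 hn hlam hmu hb hc hmin).
split; first exact: (G2 hn hT hlam hmu hb hc hmin).
move=> i /andP [hi1 hi2].
have hr : rpar R n != 0.
  by rewrite (rE R hn) mulf_neq0 ?invr_eq0 ?(Mne0 R hn) ?(nne0 R hn).
have hl : lam != 0 by rewrite gt_eqF.
have hc' : c != 0 by rewrite gt_eqF.
have [P Hw0 [Hw1 [e1 e2]]] : exists2 P : R * R * R * R,
   wvec (yv hn xs) (zv hn xs) i = \col_(k < 2) (if k == 0 then P.1.1.1 else P.1.1.2) &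
   wvec (yv hn xs) (zv hn xs) i.+1 = \col_(k < 2) (if k == 0 then P.1.2 else P.2) /\
   (P.1.2 = - (rpar R n / c) * P.1.1.1 + (c + mu / lam + rpar R n) / c * P.1.1.2 /\
    P.2 = - ((c + mu / lam + rpar R n) / c) * P.1.1.1
          + ((c + mu / lam + rpar R n) ^+ 2 / (c * rpar R n) - c / rpar R n) * P.1.1.2).
  have hi := odd_double_half i.
  case ho : (odd i) in hi *.
  - set J := i./2 in hi.
    have hJ : (J < T)%N by lia.
    have E1 := eqZo hn hT hlam hmu hb hc hmin hJ.
    have E2 := eqZe hn hT hlam hmu hb hc hmin hJ.
    rewrite (_ : (2 * J + 1)%N = i) in E1 E2; last by rewrite -hi /=; lia.
    rewrite (_ : (2 * J + 2)%N = i.+1) in E1 E2; last by rewrite -hi /=; lia.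
    exists (cf (yv hn xs) i, cf (zv hn xs) i, cf (zv hn xs) i.+1, cf (yv hn xs) i.+1).
      by rewrite /wvec ho.
    split; first by rewrite /wvec /= ho.
    exact: rec_step hl hc' hr E1 E2.
  - set J := i./2 in hi.
    have hJ : (1 <= J < T)%N by lia.
    have E1 := eqYe hn hT hlam hmu hb hc hmin hJ.
    have E2 := eqYo hn hT hlam hmu hb hc hmin hJ.
    rewrite (_ : (2 * J)%N = i) in E1 E2; last by rewrite -hi /=; lia.
    rewrite addn1 in E1 E2.
    exists (cf (zv hn xs) i, cf (yv hn xs) i, cf (yv hn xs) i.+1, cf (zv hn xs) i.+1).
      by rewrite /wvec ho.
    split; first by rewrite /wvec /= ho.
    exact: rec_step hl hc' hr E1 E2.
rewrite Hw0 Hw1; apply/matrixP => p q; rewrite !mxE !big_ord_recl big_ord0 !mxE /=.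
case: p => [[|[|//]]] hp /=; by rewrite addr0.
Qed.
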